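(* Let $G=(V,E,p,(V_{E},V_{O}))$ be a parity game, $v\in V$, and let $\sigma$ be a (history-dependent) strategy of player Odd that is oblivious with respect to odd-dominated cycles, i.e. $\sigma(\lambda\, u\,\lambda'\,u\,\lambda'')=\sigma(\lambda\,u\,\lambda'')$ whenever $u\,\lambda'\,u$ is an odd-dominated cycle. Then $\min_{\pi\in\mathrm{Plays}(\sigma,v)}\theta(\pi)\in\mathbb{M}$.
   Context: A parity game $G=(V,E,p,(V_{E},V_{O}))$: finite $V$ partitioned into $V_{E}$ (Even) and $V_{O}$ (Odd), total edge relation $E$, priorities $p:V\to\mathbb{N}$; $V_i=\{v:p(v)=i\}$. Plays are infinite paths; Even wins iff the least priority occurring infinitely often is even. A strategy of Odd is a partial function $\sigma:V^+\to V$ defined on finite paths ending in $V_{O}$, choosing a successor of the last vertex; $\mathrm{Plays}(\sigma,v)$ is the set of plays starting in $v$ consistent with $\sigma$. An odd-dominated cycle is a path $u\,\lambda'\,u$ (starting and ending at the same vertex) whose minimal priority is odd. Let $d$ be one more than the largest priority. $\mathbb{M}$ consists of $\top$ and all tuples $(m_0,\dots,m_{d-1})\in\mathbb{N}^d$ with $m_i=0$ for even $i$ and $m_i\le|V_i|$ for odd $i$; $\mathbb{M}_{ext}$ consists of $\top$ and all tuples in $\mathbb{N}^d$ that are $0$ at even positions; both are ordered lexicographically with $\top$ maximal. A $k$-dominated stretch is a finite contiguous part of a play whose minimal priority is $k$; its degree is its number of vertices of priority $k$. The value $\theta(\pi)\in\mathbb{M}_{ext}$ of a play $\pi$ is $\top$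 if Odd wins $\pi$, and otherwise the tuple that is $0$ at even positions and, at each odd position $i$, equals the degree of the maximal $i$-dominated stretch that is a prefix of $\pi$ ($0$ if none). *)

(* Defs.v *)
From mathcomp Require Import all_boot.
From Stdlib Require Import ClassicalEpsilon.

Set Implicit Arguments.
Unset Strict Implicit.
Unset Printing Implicit Defensive.

Section ParityGame.

(* A parity game: finite vertex set V, edge relation E, priorities p,
   VO = vertices of player Odd (V_E is the complement). *)
Variables (V : finType) (E : rel V) (p : V -> nat) (VO : pred V).

Definition total_edges : Prop := forall v, exists w, E v w.

Definition dd : nat := (\max_(v : V) p v).+1.

Definition is_fpath (s : seq V) : bool :=
  if s is x :: s' then path E x s' else false.

Definition ends_odd (s : seq V) : bool :=
  if s is x :: s' then VO (last x s') else false.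

Definition minp (u : V) (l : seq V) : nat := foldr minn (p u) [seq p x | x <- l].

(* u :: lam' ++ [u] is an odd-dominated cycle (assumed to be a path) *)
Definition odd_dominated_cycle (u : V) (lam' : seq V) : Prop :=
  is_fpath (u :: rcons lam' u) /\ odd (minp u (rcons lam' u)).

(* A strategy of Odd: a function on finite paths; only its values on finite
   paths ending in V_O matter, where it must choose a successor. *)
Definition odd_strategy (sigma : seq V -> V) : Prop :=
  forall s x, is_fpath (rcons s x) -> VO x -> E x (sigma (rcons s x)).

Definition cycle_oblivious (sigma : seq V -> V) : Prop :=
  forall (lam : seq V) (u : V) (lam' lam'' : seq V),
    is_fpath (lam ++ u :: lam' ++ u :: lam'') ->
    ends_odd (lam ++ u :: lam' ++ u :: lam'') ->
    odd_dominated_cycle u lam' ->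
    sigma (lam ++ u :: lam' ++ u :: lam'') = sigma (lam ++ u :: lam'').

Definition is_play (pi : nat -> V) : Prop := forall n, E (pi n) (pi n.+1).

Definition play_of (sigma : seq V -> V) (v : V) (pi : nat -> V) : Prop :=
  pi 0 = v /\ is_play pi /\
  forall n, VO (pi n) -> pi n.+1 = sigma (mkseq pi n.+1).

Definition inf_often (pi : nat -> V) (k : nat) : Prop :=
  forall N, exists n, N <= n /\ p (pi n) = k.

Definition odd_wins (pi : nat -> V) : Prop :=
  exists k, odd k /\ inf_often pi k /\ forall j, j < k -> ~ inf_often pi j.

Definition dominated_prefix (pi : nat -> V) (i n : nat) : Prop :=
  0 < n /\ minp (pi 0) (mkseq pi n) = i.

Definition prefix_degree (pi : nat -> V) (i n : nat) : nat :=
  count (fun x => p x == i) (mkseq pi n).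

Definition is_degree (pi : nat -> V) (i k : nat) : Prop :=
  (exists n, dominated_prefix pi i n /\ prefix_degree pi i n = k /\
     forall m, dominated_prefix pi i m -> prefix_degree pi i m <= k)
  \/ ((forall n, ~ dominated_prefix pi i n) /\ k = 0).

Definition degree (pi : nat -> V) (i : nat) : nat :=
  epsilon (inhabits 0) (is_degree pi i).

(* values in M_ext: None = top, Some m = tuple (m_0, ..., m_(d-1)) *)
Definition mval := option {ffun 'I_dd -> nat}.

Definition theta (pi : nat -> V) : mval :=
  if excluded_middle_informative (odd_wins pi) then None
  else Some [ffun i : 'I_dd => if odd i then degree pi i else 0].

Definition in_M (t : mval) : Prop :=
  match t with
  | None => True
  | Some m => forall i : 'I_dd,
      (~~ odd i -> m i = 0) /\ (odd i -> m i <= #|[set x : V | p x == i]|)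
  end.

Definition lex_lt_tuple (a b : {ffun 'I_dd -> nat}) : Prop :=
  exists i : 'I_dd, a i < b i /\ forall j : 'I_dd, j < i -> a j = b j.

Definition mle (s t : mval) : Prop :=
  match s, t with
  | _, None => True
  | None, Some _ => False
  | Some a, Some b => a = b \/ lex_lt_tuple a b
  end.

End ParityGame.

(* Main.v *)
Require Import Defs.
From mathcomp Require Import all_boot zify.
From Stdlib Require Import ClassicalEpsilon Classical.

Set Implicit Arguments.
Unset Strict Implicit.
Unset Printing Implicit Defensive.

Lemma minp_ge (V : finType) (p : V -> nat) u l k :
  (k <= minp p u l) = (k <= p u) && all (fun x => k <= p x) l.
Proof.
elim: l => [|x l IH]; first by rewrite /minp /= andbT.
by rewrite /minp /= leq_min -/(minp p u l) IH; case: (k <= p x); case: (k <= p u).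
Qed.

Lemma minp_in (V : finType) (p : V -> nat) u l :
  has (fun x => p x == minp p u l) (u :: l).
Proof.
elim: l => [|x l IH]; first by rewrite /= eqxx.
rewrite /minp /= -/(minp p u l).
set m := minp p u l.
rewrite /minn; case: ltnP => H.
  by rewrite eqxx /= orbT.
move: IH => /= /orP [->//|Hh]; by rewrite Hh !orbT.
Qed.

Lemma domP (V : finType) (p : V -> nat) (rho : nat -> V) i n :
  dominated_prefix p rho i n <->
  0 < n /\ (forall m, m < n -> i <= p (rho m)) /\
  (exists m, m < n /\ p (rho m) = i).
Proof.
rewrite /dominated_prefix; split.
  move=> [n0 Hm]; split => //.
  have := leqnn i; rewrite -{2}Hm minp_ge => /andP [_ /allP Hall].
  split.
    move=> m Hm'; apply: (Hall (rho m)); apply: map_f; rewrite mem_iota; lia.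
  move: (minp_in p (rho 0) (mkseq rho n)) => /hasP [x Hx /eqP Hpx].
  rewrite Hm in Hpx.
  move: Hx; rewrite inE => /orP [/eqP Hx|]; first by subst x; exists 0.
  move=> /mapP [m Hmi Hx]; subst x; exists m; move: Hmi; rewrite mem_iota; lia.
move=> [n0 [Hall [m0 [Hm0 Hp0]]]]; split => //.
apply/eqP; rewrite eqn_leq; apply/andP; split.
  have H0 := minp_ge p (rho 0) (mkseq rho n) (minp p (rho 0) (mkseq rho n)).
  rewrite leqnn in H0; move: H0 => /esym /andP [_ /allP H].
  rewrite -Hp0; apply: H; apply: map_f; rewrite mem_iota; lia.
rewrite minp_ge; apply/andP; split; first exact: Hall.
apply/allP => x /mapP [m Hm ->]; apply: Hall; move: Hm; rewrite mem_iota; lia.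
Qed.

Lemma degE (V : finType) (p : V -> nat) (rho : nat -> V) j n :
  prefix_degree p rho j n = count (fun m => p (rho m) == j) (iota 0 n).
Proof. by rewrite /prefix_degree /mkseq count_map. Qed.

Lemma nat_min (P : nat -> Prop) n : P n -> exists m, P m /\ forall k, P k -> m <= k.
Proof.
elim/ltn_ind: n => n IH Pn.
case: (classic (exists m, m < n /\ P m)) => [[m [Hm Pm]]|H].
  exact: IH Pm.
exists n; split => // k Pk; case: (leqP n k) => // Hk; exfalso; apply: H; by exists k.
Qed.

Lemma deg_unique (V : finType) (p : V -> nat) (rho : nat -> V) j k1 k2 :
  is_degree p rho j k1 -> is_degree p rho j k2 -> k1 = k2.
Proof.
move=> [[n1 [H1 [D1 M1]]]|[N1 ->]] [[n2 [H2 [D2 M2]]]|[N2 ->]] //.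
- have := M1 _ H2; have := M2 _ H1; lia.
- by exfalso; apply: (N2 n1).
- by exfalso; apply: (N1 n2).
Qed.

Lemma deg_exists (V : finType) (p : V -> nat) (rho : nat -> V) j :
  odd j -> ~ odd_wins p rho -> exists k, is_degree p rho j k.
Proof.
move=> Hj Hodd.
case: (classic (exists n, dominated_prefix p rho j n)) => [[n0 Hn0]|Hno]; last first.
  by exists 0; right; split => // n Hn; apply: Hno; exists n.
case: (classic (exists M, forall n, dominated_prefix p rho j n ->
   prefix_degree p rho j n <= M)) => [[M HM]|Hub].
  have [M0 [HM0 Hmin]] := nat_min (P := fun M => forall n, dominated_prefix p rho j n ->
   prefix_degree p rho j n <= M) HM.
  case: (classic (exists n, dominated_prefix p rho j n /\ prefix_degree p rho j n = M0))
    => [[n [Hn Hd]]|Hne].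
    by exists M0; left; exists n.
  exfalso; move: M0 HM0 Hmin Hne => [|M'] HM0 Hmin Hne.
    apply: Hne; exists n0; split => //; have := HM0 n0 Hn0; lia.
  have : forall n, dominated_prefix p rho j n -> prefix_degree p rho j n <= M'.
    move=> n Hn; have := HM0 n Hn.
    case: (classic (prefix_degree p rho j n = M'.+1)) => E.
      by exfalso; apply: Hne; exists n.
    lia.
  move/Hmin; lia.
exfalso; apply: Hodd; exists j; split => //.
have Hub' : forall M, exists n, dominated_prefix p rho j n /\ M < prefix_degree p rho j n.
  move=> M; apply: NNPP => H; apply: Hub; exists M => n Hn.
  case: (leqP (prefix_degree p rho j n) M) => // Hlt; exfalso; apply: H; by exists n.
have Hsz : forall n, prefix_degree p rho j n <= n.
  by move=> n; rewrite degE; apply: leq_trans (count_size _ _) _; rewrite size_iota.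
have Hge : forall m, j <= p (rho m).
  move=> m; have [n [/domP [_ [Hall _]] Hd]] := Hub' m.
  apply: Hall; have := Hsz n; lia.
split.
  move=> N; have [n [Hn Hd]] := Hub' N.
  have HNn : N <= n by have := Hsz n; lia.
  move: Hd; rewrite degE -(subnKC HNn) iotaD count_cat add0n => Hd.
  have Hc : count (fun m => p (rho m) == j) (iota 0 N) <= N.
    by apply: leq_trans (count_size _ _) _; rewrite size_iota.
  have : 0 < count (fun m => p (rho m) == j) (iota N (n - N)) by lia.
  rewrite -has_count => /hasP [m Hm /eqP Hpm]; exists m; split => //.
  by move: Hm; rewrite mem_iota => /andP [].
move=> j' Hj' Hinf; have [m [_ Hm]] := Hinf 0; have := Hge m; lia.
Qed.

Lemma degree_spec (V : finType) (p : V -> nat) (rho : nat -> V) j :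
  odd j -> ~ odd_wins p rho -> is_degree p rho j (degree p rho j).
Proof. by move=> Hj Ho; apply: epsilon_spec; apply: deg_exists. Qed.

Lemma allS (V : Type) (pi pi' : nat -> V) a L n (P : V -> Prop) :
  (forall m, m < a -> pi' m = pi m) -> (forall m, a <= m -> pi' m = pi (m + L)) ->
  a <= n ->
  (forall m, m < n + L -> P (pi m)) <->
  (forall m, m < n -> P (pi' m)) /\ (forall m, a <= m -> m < a + L -> P (pi m)).
Proof.
move=> Hlo Hhi Han; split.
  move=> H; split.
    move=> m Hm; case: (ltnP m a) => Hma; first by rewrite Hlo //; apply: H; lia.
    rewrite Hhi //; apply: H; lia.
  move=> m H1 H2; apply: H; lia.
move=> [H1 H2] m Hm; case: (ltnP m a) => Hma.
  rewrite -Hlo //; apply: H1; lia.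
case: (ltnP m (a + L)) => Hm2; first exact: H2.
have -> : m = (m - L) + L by lia.
rewrite -Hhi; [apply: H1|]; lia.
Qed.

Lemma exS (V : Type) (pi pi' : nat -> V) a L n (P : V -> Prop) :
  (forall m, m < a -> pi' m = pi m) -> (forall m, a <= m -> pi' m = pi (m + L)) ->
  a <= n ->
  (exists m, m < n + L /\ P (pi m)) <->
  (exists m, m < n /\ P (pi' m)) \/ (exists m, a <= m /\ m < a + L /\ P (pi m)).
Proof.
move=> Hlo Hhi Han; split.
  move=> [m [Hm HP]]; case: (ltnP m a) => Hma.
    left; exists m; rewrite Hlo //; split => //; lia.
  case: (ltnP m (a + L)) => Hm2; first by right; exists m.
  left; exists (m - L); rewrite Hhi; last lia.
  have -> : m - L + L = m by lia.
  split => //; lia.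
move=> [[m [Hm HP]]|[m [H1 [H2 HP]]]]; last by exists m; split => //; lia.
case: (ltnP m a) => Hma.
  exists m; rewrite -Hlo //; split => //; lia.
exists (m + L); rewrite -Hhi //; split => //; lia.
Qed.

Lemma cntS (V : Type) (pi pi' : nat -> V) a L n (f : pred V) :
  (forall m, m < a -> pi' m = pi m) -> (forall m, a <= m -> pi' m = pi (m + L)) ->
  a <= n ->
  count (fun m => f (pi m)) (iota 0 (n + L)) =
  count (fun m => f (pi' m)) (iota 0 n) + count (fun m => f (pi m)) (iota a L).
Proof.
move=> Hlo Hhi Han.
have -> : n + L = a + (L + (n - a)) by lia.
rewrite iotaD iotaD add0n.
have {2}-> : n = a + (n - a) by lia.
rewrite iotaD add0n !count_cat.
have -> : count (fun m => f (pi' m)) (iota 0 a) = count (fun m => f (pi m)) (iota 0 a).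
  apply: eq_in_count => m; rewrite mem_iota => /andP [_ Hm]; rewrite Hlo //.
have -> : count (fun m => f (pi' m)) (iota a (n - a)) =
          count (fun m => f (pi m)) (iota (a + L) (n - a)).
  rewrite addnC iotaDl count_map; apply: eq_in_count => m; rewrite mem_iota => /andP [Hm _].
  by rewrite /= Hhi // addnC.
lia.
Qed.

Lemma play_path (V : finType) (E : rel V) (rho : nat -> V) :
  is_play E rho -> forall n s, path E (rho s) (map rho (iota s.+1 n)).
Proof.
move=> Hp; elim=> [|n IH] s //=; by rewrite Hp IH.
Qed.

Lemma fpath_mkseq (V : finType) (E : rel V) (rho : nat -> V) n :
  is_play E rho -> is_fpath E (mkseq rho n.+1).
Proof. by move=> Hp; rewrite /is_fpath /mkseq /=; apply: play_path. Qed.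

Lemma ends_odd_mkseq (V : finType) (VO : pred V) (rho : nat -> V) n :
  ends_odd VO (mkseq rho n.+1) = VO (rho n).
Proof. by rewrite mkseqS; case: (mkseq rho n) => [|y s] //=; rewrite last_rcons. Qed.

Lemma cnt_mono (f : pred nat) n1 n2 : n1 <= n2 -> count f (iota 0 n1) <= count f (iota 0 n2).
Proof. by move=> H; rewrite -(subnKC H) iotaD count_cat leq_addr. Qed.

Lemma pigeon (V : finType) (p : V -> nat) (pi : nat -> V) i N :
  #|[set x | p x == i]| < prefix_degree p pi i N ->
  exists a b, a < b < N /\ p (pi a) = i /\ pi a = pi b.
Proof.
move=> H; apply: NNPP => Hno.
set s := [seq m <- iota 0 N | p (pi m) == i].
have Hs : size s = prefix_degree p pi i N by rewrite degE size_filter.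
have Hinj : {in s &, injective pi}.
  move=> m1 m2; rewrite !mem_filter !mem_iota => /andP [H1 /andP [_ H1']] /andP [H2 /andP [_ H2']] He.
  case: (ltngtP m1 m2) => // Hlt; exfalso; apply: Hno.
    by exists m1, m2; split; [lia | split; [apply/eqP|]].
  by exists m2, m1; split; [lia | split; [apply/eqP|]].
have Hu : uniq (map pi s) by rewrite (map_inj_in_uniq Hinj) filter_uniq // iota_uniq.
have : size (map pi s) <= size (enum [set x | p x == i]).
  apply: uniq_leq_size => // x /mapP [m]; rewrite mem_filter => /andP [Hm _] ->.
  by rewrite mem_enum inE.
rewrite size_map Hs -cardE; lia.
Qed.

Lemma cut_play (V : finType) (E : rel V) (p : V -> nat) (VO : pred V)
    (sigma : seq V -> V) v (pi : nat -> V) a L :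
  cycle_oblivious E p VO sigma -> play_of E VO sigma v pi -> 0 < L ->
  pi (a + L) = pi a -> odd (p (pi a)) ->
  (forall m, a <= m <= a + L -> p (pi a) <= p (pi m)) ->
  play_of E VO sigma v (fun n => if n < a then pi n else pi (n + L)).
Proof.
move=> Hob [H0 [Hpl Hcons]] HL Hab Hodd Hcyc.
set pi' := fun n => if n < a then pi n else pi (n + L).
have Hle : forall m, m <= a -> pi' m = pi m.
  move=> m Hm; rewrite /pi'; case: ltnP => Hma //.
  by have -> : m = a by lia.
have Hhi : forall m, a <= m -> pi' m = pi (m + L).
  by move=> m Hm; rewrite /pi'; case: ltnP => // H; lia.
split; first by rewrite Hle.
split.
  move=> n; case: (ltnP n a) => Hn.
    rewrite (Hle n) ?(ltnW Hn) // (Hle n.+1) //; exact: Hpl.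
  rewrite (Hhi n) // (Hhi n.+1); last lia.
  rewrite addSn; exact: Hpl.
move=> n HVO; case: (ltnP n a) => Hn.
  rewrite (Hle n.+1) //; rewrite (Hle n) in HVO; last lia.
  have -> : mkseq pi' n.+1 = mkseq pi n.+1.
    by apply/eq_in_map => m; rewrite mem_iota => /andP [_ Hm]; apply: Hle; lia.
  exact: Hcons.
rewrite (Hhi n) // in HVO.
rewrite (Hhi n.+1); last lia.
rewrite addSn (Hcons _ HVO).
have E1 : mkseq pi (n + L).+1 = mkseq pi a ++ pi a :: map pi (iota a.+1 (L-1)) ++
            pi a :: map pi (iota (a + L).+1 (n - a)).
  rewrite /mkseq.
  have -> : (n + L).+1 = a + ((L - 1).+1 + (n - a).+1) by lia.
  rewrite iotaD add0n (iotaD a (L - 1).+1) !map_cat.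
  have -> : a + (L - 1).+1 = a + L by lia.
  by rewrite /= Hab.
have E2 : mkseq pi' n.+1 = mkseq pi a ++ pi a :: map pi (iota (a + L).+1 (n - a)).
  rewrite /mkseq; have -> : n.+1 = a + (n - a).+1 by lia.
  rewrite (iotaD 0 a (n - a).+1) map_cat add0n /=.
  congr (_ ++ _ :: _).
  - by apply/eq_in_map => m; rewrite mem_iota => /andP [_ Hm]; apply: Hle; lia.
  - by rewrite Hle.
  - have -> : (a + L).+1 = L + a.+1 by lia.
    rewrite iotaDl -map_comp; apply/eq_in_map => m; rewrite mem_iota => /andP [Hm _] /=.
    by rewrite Hhi; [f_equal; lia| lia].
have HI : rcons (map pi (iota a.+1 (L - 1))) (pi a) = map pi (iota a.+1 L).
  rewrite -Hab -map_rcons; congr map.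
  have -> : iota a.+1 L = iota a.+1 ((L - 1) + 1) by congr iota; lia.
  rewrite iotaD /= cats1; congr rcons; lia.
rewrite E1 Hob.
- by rewrite E2.
- by rewrite -E1; apply: fpath_mkseq.
- by rewrite -E1 ends_odd_mkseq.
split; rewrite HI; first by rewrite /is_fpath; apply: play_path.
have -> : minp p (pi a) (map pi (iota a.+1 L)) = p (pi a) => //.
apply/eqP; rewrite eqn_leq; apply/andP; split.
  have H1 := minp_ge p (pi a) (map pi (iota a.+1 L)) (minp p (pi a) (map pi (iota a.+1 L))).
  by rewrite leqnn in H1; move: H1 => /esym /andP [].
rewrite minp_ge leqnn /=; apply/allP => x /mapP [m Hm ->]; apply: Hcyc.
move: Hm; rewrite mem_iota; lia.
Qed.

Lemma reduce (V : finType) (E : rel V) (p : V -> nat) (VO : pred V)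
    (sigma : seq V -> V) v (pi : nat -> V) i D :
  cycle_oblivious E p VO sigma -> play_of E VO sigma v pi -> ~ odd_wins p pi -> odd i ->
  is_degree p pi i D -> #|[set x | p x == i]| < D ->
  exists pi', play_of E VO sigma v pi' /\ ~ odd_wins p pi' /\ degree p pi' i < D /\
     forall j, odd j -> j < i -> degree p pi' j = degree p pi j.
Proof.
move=> Hob Hplay Hnw Hi Hdeg Hbig.
case: Hdeg => [[N [HN [HD Hmax]]]|[_ HD0]]; last by subst D.
have [a [b [Hab [Hpa Heq]]]] : exists a b, a < b < N /\ p (pi a) = i /\ pi a = pi b.
  by apply: pigeon; rewrite HD.
move: (HN) => /domP [HN0 [HallN HexN]].
set L := b - a.
have HL : 0 < L by rewrite /L; lia.
have Hb : b = a + L by rewrite /L; lia.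
set pi' := fun n => if n < a then pi n else pi (n + L).
have Hlo : forall m, m < a -> pi' m = pi m by move=> m Hm; rewrite /pi' Hm.
have Hhi : forall m, a <= m -> pi' m = pi (m + L).
  by move=> m Hm; rewrite /pi'; case: ltnP => // H; lia.
have Hcyc : forall m, a <= m < a + L -> i <= p (pi m).
  by move=> m Hm; apply: HallN; lia.
have Hplay' : play_of E VO sigma v pi'.
  apply: (cut_play (p := p)) => //; first by transitivity (pi b); [congr pi; rewrite /L; lia | by rewrite Heq].
  - by rewrite Hpa.
  - by move=> m Hm; rewrite Hpa; apply: HallN; lia.
have Hnw' : ~ odd_wins p pi'.
  move=> [k [Hk [Hinf Hnot]]]; apply: Hnw; exists k; split => //; split.
    move=> N0; have [n [Hn Hpn]] := Hinf (N0 + a); exists (n + L); split; first lia.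
    by rewrite -Hhi //; lia.
  move=> j Hj Hinfj; apply: (Hnot j Hj) => N0.
  have [n [Hn Hpn]] := Hinfj (N0 + a + L); exists (n - L); split; first lia.
  rewrite Hhi; last lia.
  by have -> : n - L + L = n by lia.
exists pi'; split => //; split => //; split.
  have := degree_spec Hi Hnw'.
  move=> [[n0 [Hn0 [Hd0 _]]]|[_ ->]]; last by lia.
  rewrite -Hd0; case: (leqP a n0) => Han.
    have Hdom : dominated_prefix p pi i (n0 + L).
      move: Hn0 => /domP [Hpos [Hall Hex]]; apply/domP; split; first lia.
      split.
        apply/(allS (fun x => i <= p x) Hlo Hhi Han); split => // m H1 H2.
        by apply: Hcyc; rewrite H1 H2.
      by apply/(exS (fun x => p x = i) Hlo Hhi Han); left.
    have := Hmax _ Hdom.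
    rewrite !degE (cntS (fun x => p x == i) Hlo Hhi Han).
    have : 0 < count (fun m => p (pi m) == i) (iota a L).
      rewrite -has_count; apply/hasP; exists a; last by rewrite Hpa.
      rewrite mem_iota; lia.
    lia.
  have -> : prefix_degree p pi' i n0 = prefix_degree p pi i n0.
    rewrite !degE; apply: eq_in_count => m; rewrite mem_iota => /andP [_ Hm].
    by rewrite /= Hlo //; lia.
  rewrite -HD !degE.
  have H1 := cnt_mono (fun m => p (pi m) == i) (ltnW Han).
  have H2 : count (fun m => p (pi m) == i) (iota 0 (a + L)) <=
            count (fun m => p (pi m) == i) (iota 0 N) by apply: cnt_mono; lia.
  move: H2; rewrite iotaD count_cat add0n.
  have : 0 < count (fun m => p (pi m) == i) (iota a L).
    rewrite -has_count; apply/hasP; exists a; last by rewrite Hpa.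
    rewrite mem_iota; lia.
  lia.
move=> j Hj Hji.
have Hcyc0 : count (fun m => p (pi m) == j) (iota a L) = 0.
  apply/eqP; rewrite -leqn0 leqNgt -has_count; apply/hasPn => m; rewrite mem_iota => Hm.
  by apply/negP => /eqP Hpm; have := Hcyc m Hm; lia.
have Hto : forall m', a <= m' -> dominated_prefix p pi' j m' ->
    dominated_prefix p pi j (m' + L) /\ prefix_degree p pi j (m' + L) = prefix_degree p pi' j m'.
  move=> m' Ha /domP [Hpos [Hall Hex]]; split.
    apply/domP; split; first lia.
    split.
      apply/(allS (fun x => j <= p x) Hlo Hhi Ha); split => // m H1 H2.
      have := Hcyc m; rewrite H1 H2 /=; lia.
    by apply/(exS (fun x => p x = j) Hlo Hhi Ha); left.
  by rewrite !degE (cntS (fun x => p x == j) Hlo Hhi Ha) Hcyc0 addn0.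
have Hfrom : forall m, dominated_prefix p pi j m ->
    dominated_prefix p pi' j (m - L) /\ prefix_degree p pi j m = prefix_degree p pi' j (m - L).
  move=> m Hm.
  have [m' [Ha Em]] : exists m', a < m' /\ m = m' + L.
    move: (Hm) => /domP [_ [_ [m0 [Hm0 Hp0]]]].
    have : N <= m0 by case: (leqP N m0) => // H; have := HallN m0 H; lia.
    exists (m - L); lia.
  subst m; rewrite addnK.
  have Ha' : a <= m' by lia.
  move: Hm => /domP [Hpos [Hall Hex]]; split.
    apply/domP; split; first lia.
    split.
      by move: Hall => /(allS (fun x => j <= p x) Hlo Hhi Ha') [].
    move: Hex => /(exS (fun x => p x = j) Hlo Hhi Ha') [//|[m0 [H1 [H2 Hp]]]].
    by have := Hcyc m0; rewrite H1 H2 /=; lia.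
  by rewrite !degE (cntS (fun x => p x == j) Hlo Hhi Ha') Hcyc0 addn0.
have Hs := degree_spec Hj Hnw.
apply: (deg_unique _ Hs).
case: (degree_spec Hj Hnw') => [[n0 [Hn0 [Hd0 Hmax0]]]|[Hno Hz]].
  have Ha : a <= n0.
    move: (Hn0) => /domP [_ [_ [m0 [Hm0 Hp0]]]].
    case: (leqP a n0) => // H; rewrite Hlo in Hp0; last lia.
    have := HallN m0; lia.
  left; exists (n0 + L); have [Hd Hdeg] := Hto n0 Ha Hn0.
  split => //; split; first by rewrite Hdeg.
  by move=> m Hm; have [Hd' ->] := Hfrom m Hm; apply: Hmax0.
right; split => // m Hm; have [Hd' _] := Hfrom m Hm; exact: Hno _ Hd'.
Qed.

Definition pstep (V : finType) (E : rel V) (VO : pred V) (sigma : seq V -> V) v (s : seq V) : V :=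
  let x := last v s in if VO x then sigma s else epsilon (inhabits x) (fun w => E x w).

Fixpoint pbuild (V : finType) (E : rel V) (VO : pred V) (sigma : seq V -> V) v n : seq V :=
  match n with
  | 0 => [:: v]
  | n'.+1 => rcons (pbuild E VO sigma v n') (pstep E VO sigma v (pbuild E VO sigma v n'))
  end.

Lemma play_exists (V : finType) (E : rel V) (VO : pred V) (sigma : seq V -> V) v :
  total_edges E -> odd_strategy E VO sigma -> exists pi, play_of E VO sigma v pi.
Proof.
move=> Htot Hstr.
pose pi n := last v (pbuild E VO sigma v n).
have Hb : forall n, pbuild E VO sigma v n = mkseq pi n.+1.
  elim=> [|n IH] //.
  rewrite mkseqS -IH /=; congr rcons; by rewrite /pi /= last_rcons.
have Hlast : forall n, last v (mkseq pi n.+1) = pi n.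
  by move=> n; rewrite mkseqS last_rcons.
have Hstep : forall n, pi n.+1 = pstep E VO sigma v (mkseq pi n.+1).
  by move=> n; rewrite /pi /= last_rcons -Hb.
have Hedge : forall n, is_fpath E (mkseq pi n.+1) -> E (pi n) (pi n.+1).
  move=> n Hf; rewrite Hstep /pstep Hlast.
  case: ifP => HVO.
    by rewrite mkseqS; apply: Hstr => //; rewrite -mkseqS.
  by apply: (epsilon_spec (inhabits (pi n)) (fun w => E (pi n) w)); apply: Htot.
have Hpath : forall n, is_fpath E (mkseq pi n.+1).
  elim=> [|n IH] //.
  rewrite /is_fpath /mkseq.
  have -> : iota 0 n.+2 = 0 :: rcons (iota 1 n) n.+1.
    have HI := iotaD 1 n 1; rewrite addn1 add1n /= cats1 in HI.
    by rewrite /= HI.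
  rewrite /= map_rcons rcons_path; apply/andP; split; first exact: IH.
  have -> : last (pi 0) [seq pi i | i <- iota 1 n] = pi n.
    by rewrite -(Hlast n).
  exact: Hedge.
exists pi; split; first by [].
split; first by move=> n; apply: Hedge.
move=> n HVO; by rewrite Hstep /pstep Hlast HVO.
Qed.

Lemma lex_min n (P : {ffun 'I_n -> nat} -> Prop) a0 : P a0 ->
  exists a, P a /\ forall b, P b -> a = b \/
    exists i : 'I_n, a i < b i /\ forall j : 'I_n, j < i -> a j = b j.
Proof.
move=> Pa0.
have H : forall k, k <= n -> exists a, P a /\ forall b, P b ->
    (forall j : 'I_n, j < k -> a j = b j) \/
    exists i : 'I_n, i < k /\ a i < b i /\ forall j : 'I_n, j < i -> a j = b j.
  elim=> [|k IH] Hk.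
    by exists a0; split => // b _; left.
  have [a [Pa Ha]] := IH (ltnW Hk).
  pose o := Ordinal Hk.
  have [m [[b' [Pb' [Agr Eb']]] Hmin]] := nat_min (P := fun m => exists b, P b /\
      (forall j : 'I_n, j < k -> a j = b j) /\ b o = m)
     (ex_intro _ a (conj Pa (conj (fun _ _ => erefl) erefl))).
  exists b'; split => // b Pb.
  case: (Ha b Pb) => [Hag|[i [Hik [Hlt Hbel]]]].
    have Hmb : m <= b o.
      by apply: Hmin; exists b; split => //; split.
    case: (ltngtP (b' o) (b o)) => Hc.
    - right; exists o; split => //; split => // j Hj.
      by rewrite -Agr // Hag.
    - by rewrite Eb' in Hc; lia.
    - left => j Hj; case: (ltngtP j k) => Hjk; last by have -> : j = o by apply: val_inj.
      + by rewrite -Agr // Hag.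
      + lia.
  right; exists i; split; first lia.
  rewrite -Agr //; split => // j Hj; rewrite -Agr ?Hbel //; lia.
have [a [Pa Ha]] := H n (leqnn n).
exists a; split => // b Pb; case: (Ha b Pb) => [Hag|[i [_ Hi]]]; last by right; exists i.
by left; apply/ffunP => j; apply: Hag.
Qed.

Lemma lex_asym n (a b : {ffun 'I_n -> nat}) :
  (exists i : 'I_n, a i < b i /\ forall j : 'I_n, j < i -> a j = b j) ->
  (b = a \/ exists i : 'I_n, b i < a i /\ forall j : 'I_n, j < i -> b j = a j) -> False.
Proof.
move=> [i [Hi Hj]] [E|[i' [Hi' Hj']]]; first by subst b; lia.
case: (ltngtP i i') => H.
- by have := Hj' i H; lia.
- by have := Hj i' H; lia.
- have Ei : i = i' by apply: val_inj.
  by subst i'; lia.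
Qed.

Theorem lemma3 (V : finType) (E : rel V) (p : V -> nat) (VO : pred V)
    (sigma : seq V -> V) (v : V) :
  total_edges E ->
  odd_strategy E VO sigma ->
  cycle_oblivious E p VO sigma ->
  exists pi : nat -> V,
    play_of E VO sigma v pi /\
    (forall pi' : nat -> V, play_of E VO sigma v pi' ->
       mle (theta p pi) (theta p pi')) /\
    in_M (theta p pi).
Proof.
move=> Htot Hstr Hob.
have [pi0 Hpi0] := play_exists v Htot Hstr.
case: (classic (exists pi a, play_of E VO sigma v pi /\ theta p pi = Some a))
  => [[pi1 [a1 [H1 E1]]]|Hnone]; last first.
  have Hn : forall pi, play_of E VO sigma v pi -> theta p pi = None.
    move=> pi Hpi; case E': (theta p pi) => [a|] //; exfalso; apply: Hnone.
    by exists pi, a.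
  exists pi0; split => //; split; last by rewrite Hn.
  by move=> pi' Hpi'; rewrite !Hn.
have [a [[pi [Hpi Ea]] Hmin]] := lex_min (P := fun a => exists pi,
    play_of E VO sigma v pi /\ theta p pi = Some a) (ex_intro _ pi1 (conj H1 E1)).
exists pi; split => //; split.
  move=> pi' Hpi'; rewrite Ea; case E': (theta p pi') => [b|] //=.
  by apply: Hmin; exists pi'.
rewrite Ea; move: Ea; rewrite /theta.
case: excluded_middle_informative => // Hnw [Ea] i; subst a.
rewrite ffunE; split; first by case: (odd i).
move=> Hoi; rewrite Hoi.
case: (leqP (degree p pi i) #|[set x | p x == i]|) => // Hbig; exfalso.
have Hd := degree_spec Hoi Hnw.
have [pi' [Hp' [Hnw' [Hlt Heqj]]]] := reduce Hob Hpi Hnw Hoi Hd Hbig.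
set a' := [ffun j : 'I_(dd p) => if odd j then degree p pi' j else 0].
have Hth : theta p pi' = Some a'.
  by rewrite /theta; case: excluded_middle_informative.
have := Hmin a' (ex_intro _ pi' (conj Hp' Hth)).
apply: lex_asym.
exists i; rewrite !ffunE Hoi; split => // j Hj; rewrite !ffunE.
case Hoj: (odd j) => //; exact: Heqj.
Qed.
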